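(* Let $L$ be a lattice with canonical extension $L^\delta$, and let $K(L^\delta)$ denote the set of closed elements of $L^\delta$. If $k\in K(L^\delta)$ is finitely prime and $o=\bigvee\{b\in L \mid b\not\geq k\}$ (join computed in $L^\delta$), then $k\not\leq o$.
   Context: The canonical extension of a lattice $L$ is a complete lattice $L^\delta$ containing $L$ as a sublattice such that (denseness) every element of $L^\delta$ is a join of meets of elements of $L$ and a meet of joins of elements of $L$, and (compactness) for all $S,T\subseteq L$, if $\bigwedge S\leq\bigvee T$ in $L^\delta$ then $\bigwedge S'\leq\bigvee T'$ for some finite $S'\subseteq S$, $T'\subseteq T$. $K(L^\delta)$ is the set of elements of $L^\delta$ that are meets of subsets of $L$ (closed elements). An element $u\in L^\delta$ is finitely prime if $u\neq\bot$ and for all $v,w\in L^\delta$, $u\leq v\vee w$ implies $u\leq v$ or $u\leq w$. *)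

(* Defs.v *)
From mathcomp Require Import all_boot all_order.
Set Implicit Arguments. Unset Strict Implicit. Unset Printing Implicit Defensive.
Import Order.Theory.
Local Open Scope order_scope.

Section CanExt.
Context {dL dD : Order.disp_t} {L : latticeType dL} {D : latticeType dD}.

Definition is_lub (A : D -> Prop) (x : D) :=
  (forall a, A a -> a <= x) /\ (forall y, (forall a, A a -> a <= y) -> x <= y).
Definition is_glb (A : D -> Prop) (x : D) :=
  (forall a, A a -> x <= a) /\ (forall y, (forall a, A a -> y <= a) -> y <= x).

Definition img (e : L -> D) (S : L -> Prop) : D -> Prop :=
  fun x => exists2 b, S b & x = e b.

Record canonical_extension (e : L -> D)
    (sup inf : (D -> Prop) -> D) : Prop := {
  ce_inj : injective e;
  ce_meet : forall x y, e (x `&` y) = e x `&` e y;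
  ce_join : forall x y, e (x `|` y) = e x `|` e y;
  ce_sup : forall A, is_lub A (sup A);
  ce_inf : forall A, is_glb A (inf A);
  ce_dense_join : forall u : D, exists2 M : D -> Prop, u = sup M &
      forall x, M x -> exists S : L -> Prop, x = inf (img e S);
  ce_dense_meet : forall u : D, exists2 M : D -> Prop, u = inf M &
      forall x, M x -> exists S : L -> Prop, x = sup (img e S);
  ce_compact : forall S T : L -> Prop,
      inf (img e S) <= sup (img e T) ->
      exists S' T' : seq L, [/\ forall b, b \in S' -> S b,
                                forall b, b \in T' -> T b &
        inf (img e (fun b => b \in S')) <= sup (img e (fun b => b \in T'))]
}.

Definition closed_elt (e : L -> D) (inf : (D -> Prop) -> D) (u : D) :=
  exists S : L -> Prop, u = inf (img e S).

Definition fin_prime (sup : (D -> Prop) -> D) (u : D) :=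
  u <> sup (fun _ => False) /\
  forall v w : D, u <= v `|` w -> u <= v \/ u <= w.

End CanExt.

(* Main.v *)
Require Import Defs.
From mathcomp Require Import all_boot all_order.
Import Order.Theory.
Local Open Scope order_scope.

Lemma emono (dL dD : Order.disp_t) (L : latticeType dL) (D : latticeType dD)
  (e : L -> D) (hj : forall x y, e (x `|` y) = e x `|` e y) x y :
  x <= y -> e x <= e y.
Proof.
move=> /join_idPr H; apply/join_idPr; by rewrite -hj H.
Qed.

Theorem lemma2p3 (dL dD : Order.disp_t) (L : latticeType dL) (D : latticeType dD)
  (e : L -> D) (sup inf : (D -> Prop) -> D)
  (hCE : canonical_extension e sup inf)
  (k : D) (hk : closed_elt e inf k) (hprime : fin_prime sup k) :
  ~ (k <= sup (img e (fun b : L => ~ (k <= e b)))).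
Proof.
case: hk => S kS; case: hprime => hbot hpr.
move=> H; rewrite kS in H.
have [S' [T' [HS HT Hle]]] := ce_compact hCE H.
rewrite -?kS in Hle.
have k1 : k <= inf (img e (fun b => b \in S')).
  apply: (ce_inf hCE _).2 => a [b /HS bS ->].
  rewrite kS; apply: (ce_inf hCE _).1; by exists b.
have k2 := le_trans k1 Hle.
clear Hle; case: T' HT k2 => [|t ts] HT k2.
  apply: hbot; apply/le_anti/andP; split.
    apply: le_trans k2 _; apply: (ce_sup hCE _).2 => a [b]; by rewrite in_nil.
  by apply: (ce_sup hCE _).2.
have k3 : k <= e (foldr Order.join t ts).
  apply: le_trans k2 _; apply: (ce_sup hCE _).2 => a [b bin ->].
  apply: (@emono _ _ L D e (ce_join hCE)).
  move: bin; rewrite inE => /orP [/eqP ->|].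
    by elim: ts {HT} => //= x ts IH; apply: le_trans IH _; rewrite leUr.
  elim: ts {HT} => //= x ts IH; rewrite inE => /orP [/eqP ->|/IH h].
    by rewrite leUl.
  by apply: le_trans h _; rewrite leUr.
move: k3; have: forall b, b \in t :: ts -> ~ k <= e b by rewrite kS; move=> b /HT.
elim: ts {HT k2} => [|x ts IH] /= Hall.
  by apply: Hall; rewrite inE eqxx.
rewrite (ce_join hCE) => /hpr [h|h].
  by apply: (Hall x) => //; rewrite !inE eqxx orbT.
apply: IH h => b; rewrite !inE => /orP [/eqP ->|hb].
  by apply: Hall; rewrite inE eqxx.
by apply: Hall; rewrite !inE hb !orbT.
Qed.
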